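(* Let $C\subseteq\mathbb{F}_2^n$ be a code. For every $i\in\{0,\dots,n\}$: (1) $\displaystyle\sum_{j=0}^n\ \sum_{s\in\mathcal S\left(\frac{\delta(C)+(\gamma-1)(i-j)}{2}\right)}\lambda(i,j,s)\,W^{\mathrm{H}}_j(C)\le\binom ni$; (2) $\displaystyle\sum_{j=0}^n\ \sum_{s\in\mathcal S\left(\frac{\hat\delta(C)+(\gamma-1)i}{2}\right)}\lambda(i,j,s)\,W^{\mathrm{H}}_j(C)\le\binom ni$.
   Context: Let $n\ge2$ and fix reals $0<p\le q<1/2$. Let $\gamma:=\log_{q/(1-p)}\left(\frac{p}{1-q}\right)$. For $x\in\mathbb{F}_2^n$, $\omega^{\mathrm{H}}(x)=|\{i:x_i=1\}|$; $d_{ab}(y,x)=|\{i: y_i=a,\ x_i=b\}|$. Discrepancy: $\delta(y,x):=\gamma\,d_{10}(y,x)+d_{01}(y,x)$; symmetric discrepancy: $\hat\delta(y,x):=\delta(y,x)-\omega^{\mathrm{H}}(y)(\gamma-1)$. A code is $C\subseteq\mathbb{F}_2^n$ with $|C|\ge2$; $\delta(C)$, $\hat\delta(C)$ are the minima of $\delta$, $\hat\delta$ over ordered pairs of distinct codewords. $W^{\mathrm{H}}_j(C)$ is the number of codewords of Hamming weight $j$. $\mathcal S:=\{a+\gamma b:a,b\in\mathbb N\}$, $\mathcal S(h):=\{s\in\mathcal S:0\le s<h\}$. For real $a,b$, $\mathrm{Bin}(a,b)=\binom ab$ if $a,b\in\mathbb N$ and $0$ otherwise, and $\lambda(i,j,s):=\mathrm{Bin}\!\left(j,\frac{i\gamma-s+j}{\gamma+1}\right)\mathrm{Bin}\!\left(n-j,\frac{s-j+i}{\gamma+1}\right)$.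 *)

(* Defs.v *)
From HB Require Import structures.
From mathcomp Require Import all_boot all_order all_algebra.
From mathcomp Require Import all_classical all_reals all_analysis.
Set Implicit Arguments. Unset Strict Implicit. Unset Printing Implicit Defensive.
Import Order.TTheory GRing.Theory Num.Theory.
Local Open Scope classical_set_scope.
Local Open Scope ring_scope.

Definition gamma (R : realType) (p q : R) : R :=
  ln (p / (1 - q)) / ln (q / (1 - p)).

Definition wH n (x : 'rV['F_2]_n) : nat := #|[set i : 'I_n | x ord0 i == 1]|.

Definition dab n (a b : 'F_2) (y x : 'rV['F_2]_n) : nat :=
  #|[set i : 'I_n | (y ord0 i == a) && (x ord0 i == b)]|.

Definition disc (R : realType) (g : R) n (y x : 'rV['F_2]_n) : R :=
  g * (dab 1 0 y x)%:R + (dab 0 1 y x)%:R.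

Definition sdisc (R : realType) (g : R) n (y x : 'rV['F_2]_n) : R :=
  disc g y x - (wH y)%:R * (g - 1).

Definition code_min (R : realType) n (f : 'rV['F_2]_n -> 'rV['F_2]_n -> R)
    (C : {set 'rV['F_2]_n}) : R :=
  inf [set r : R | exists y x, [/\ y \in C, x \in C, x != y & r = f y x]].

Definition WH n (C : {set 'rV['F_2]_n}) (j : nat) : nat :=
  #|[set x in C | wH x == j]|.

Definition Sset (R : realType) (g h : R) : set R :=
  [set s | (exists a b : nat, s = a%:R + g * b%:R) /\ 0 <= s /\ s < h].

Definition Bin (R : realType) (a b : R) : R :=
  if (a \is a Num.nat) && (b \is a Num.nat)
  then ('C(Num.truncn a, Num.truncn b))%:R else 0.

Definition lambda (R : realType) (g : R) (n i j : nat) (s : R) : R :=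
  Bin j%:R ((i%:R * g - s + j%:R) / (g + 1)) *
  Bin (n%:R - j%:R) ((s - j%:R + i%:R) / (g + 1)).

(* Main.v *)
Require Import Defs.
From HB Require Import structures.
From mathcomp Require Import all_boot all_order all_algebra.
From mathcomp Require Import all_classical all_reals all_analysis.
From mathcomp Require Import ring lra.
Import Order.TTheory GRing.Theory Num.Theory.
Local Open Scope classical_set_scope.
Local Open Scope ring_scope.
From mathcomp Require Import zify.
Set Implicit Arguments. Unset Strict Implicit.

Lemma gamma_ge0 (R : realType) (p q : R) : 0 < p -> p <= q -> q < 1 / 2 -> 0 <= gamma p q.
Proof.
move=> hp hpq hq; rewrite /gamma.
have h1 : ln (p / (1 - q)) < 0.
  apply: ln_lt0; apply/andP; split; first by apply: divr_gt0; lra.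
  by rewrite ltr_pdivrMr; lra.
have h2 : ln (q / (1 - p)) < 0.
  apply: ln_lt0; apply/andP; split; first by apply: divr_gt0; lra.
  by rewrite ltr_pdivrMr; lra.
rewrite -mulrNN -invrN; apply: divr_ge0; lra.
Qed.

Lemma F2_cases (a : 'F_2) : a = 0 \/ a = 1.
Proof. by case: a => [[|[|m]] H]; [left; apply/val_inj | right; apply/val_inj | ]. Qed.

Lemma F2_10 : (1 : 'F_2) != 0. Proof. by []. Qed.

Lemma card_setE n (P : pred 'I_n) : #|[set k | P k]| = \sum_k (P k : nat).
Proof.
rewrite -sum1_card big_mkcond /=; apply: eq_bigr => k _; rewrite /in_mem /= /in_set asboolb; by case: (P k).
Qed.

Section Cnt.
Variable n : nat.
Implicit Types x y : 'rV['F_2]_n.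

Lemma wH_split y x : wH y = addn (dab 1 0 y x) (dab 1 1 y x).
Proof.
rewrite /wH /dab !card_setE -big_split /=; apply: eq_bigr => k _.
by case: (F2_cases (y ord0 k)) => ->; case: (F2_cases (x ord0 k)) => ->.
Qed.

Lemma dab_swap y x a b : dab a b x y = dab b a y x.
Proof. by rewrite /dab !card_setE; apply: eq_bigr => k _; rewrite andbC. Qed.

Lemma dab_tri x2 x1 y a b : a != b ->
  (dab a b x2 x1 <= dab a b x2 y + dab a b y x1)%N.
Proof.
move=> ab; rewrite /dab !card_setE -big_split /=; apply: leq_sum => k _.
case: (F2_cases a) ab => ->; case: (F2_cases b) => -> // _;
by case: (F2_cases (y ord0 k)) => ->; case: (F2_cases (x1 ord0 k)) => ->;
  case: (F2_cases (x2 ord0 k)) => ->.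
Qed.
End Cnt.

Section Disc.
Variables (R : realType) (n : nat) (g : R).
Implicit Types x y : 'rV['F_2]_n.

Lemma disc_swap x y : disc g x y = disc g y x - (g - 1) * ((wH y)%:R - (wH x)%:R).
Proof.
rewrite /disc (wH_split y x) (wH_split x y) !(dab_swap y x) !natrD.
set a := (dab 1 0 y x)%:R; set b := (dab 0 1 y x)%:R; set c := (dab 1 1 y x)%:R.
ring.
Qed.

Lemma disc_tri x2 x1 y : 0 <= g -> disc g x2 x1 <= disc g x2 y + disc g y x1.
Proof.
move=> g0; rewrite /disc.
have h1 := dab_tri x2 x1 y (F2_10).
have h2 := @dab_tri _ x2 x1 y 0 1 isT.
move: h1 h2; rewrite -!(ler_nat R) !natrD => h1 h2.
have := ler_wpM2l g0 h1; lra.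
Qed.
End Disc.

Lemma code_min_le (R : realType) n (f : 'rV['F_2]_n -> 'rV['F_2]_n -> R) (C : {set 'rV['F_2]_n}) y x :
  y \in C -> x \in C -> x != y -> code_min f C <= f y x.
Proof.
move=> yC xC xy; apply: ge_inf; last by exists y, x.
exists (- \sum_y' \sum_x' `|f y' x'|) => r [y' [x' [_ _ _ ->]]].
rewrite lerNl; apply: le_trans (_ : - f y' x' <= `|f y' x'|) _.
  by rewrite -normrN ler_norm.
rewrite (bigD1 y') //= (bigD1 x') //=.
have h1 : 0 <= \sum_(i | i != x') `|f y' i| by apply: sumr_ge0 => *; apply: normr_ge0.
have h2 : 0 <= \sum_(i | i != y') \sum_x' `|f i x'| by apply: sumr_ge0 => *; apply: sumr_ge0 => *; apply: normr_ge0.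
lra.
Qed.

Lemma cardT_sum (T : finType) (P : {pred T}) : #|P| = \sum_k (k \in P : nat).
Proof.
rewrite -sum1_card big_mkcond /=; apply: eq_bigr => k _; by case: (k \in P).
Qed.

Lemma impl (a b : bool) : (a -> b) -> a ==> b.
Proof. by move/implyP. Qed.

Section Count.
Local Open Scope set_scope.
Variable n : nat.

Definition rowof (U V : {set 'I_n}) : 'rV['F_2]_n :=
  \row_(k < n) (if k \in U :|: V then (1 : 'F_2) else 0).

Lemma rowofE U V k : (rowof U V ord0 k == 1) = (k \in U :|: V).
Proof. by rewrite /rowof mxE; case: (k \in U :|: V). Qed.

Lemma count_lb (x : 'rV['F_2]_n) (A B : nat) :
  leq ('C(wH x, B) * 'C(n - wH x, A))%N
   #|[set y : 'rV['F_2]_n | [&& wH y == (A + B)%N, dab 1 0 y x == A &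
        addn (dab 0 1 y x) B == wH x]]|.
Proof.
pose X := [set k : 'I_n | x ord0 k == 1].
have cX : #|X| = wH x by rewrite /wH card_setE cardT_sum; apply: eq_bigr => k _; rewrite inE.
have cCX : #|~: X| = (n - wH x)%N by have := cardsC X; rewrite card_ord cX => h; lia.
pose PU := [set U : {set 'I_n} | U \subset X & #|U| == B].
pose PV := [set V : {set 'I_n} | V \subset ~: X & #|V| == A].
have hP : #|finset.setX PU PV| = ('C(wH x, B) * 'C(n - wH x, A))%N.
  by rewrite cardsX /PU /PV !cards_draws cX cCX.
rewrite -hP.
pose F := fun uv : {set 'I_n} * {set 'I_n} => rowof uv.1 uv.2.
have key : forall uv, uv \in finset.setX PU PV ->
   [/\ forall k, k \in uv.1 -> x ord0 k == 1, forall k, k \in uv.2 -> x ord0 k != 1,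
       #|uv.1| = B & #|uv.2| = A].
  move=> [U V]; rewrite inE /= !inE => /andP[/andP[/fintype.subsetP sU /eqP cU] /andP[/fintype.subsetP sV /eqP cV]].
  split => // k.
    by move/sU; rewrite inE.
  by move/sV; rewrite !inE.
have injF : {in finset.setX PU PV &, injective F}.
  move=> [U1 V1] [U2 V2] /key[/= sU1 sV1 _ _] /key[/= sU2 sV2 _ _] /rowP eq12.
  have e : forall k, (k \in U1 :|: V1) = (k \in U2 :|: V2).
    by move=> k; rewrite -!rowofE; have := eq12 k; rewrite /F /= !mxE => ->.
  congr pair; apply/setP => k; have := e k; rewrite !inE;
    have := impl (sU1 k); have := impl (sU2 k); have := impl (sV1 k); have := impl (sV2 k);
    by case: (k \in U1); case: (k \in U2); case: (k \in V1); case: (k \in V2);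
      case: (x ord0 k == 1).
rewrite -(card_in_imset injF); apply: subset_leq_card; apply/fintype.subsetP => y.
case/imsetP => -[U V] /key[/= sU sV cU cV] ->; rewrite inE /F /=.
apply/and3P; split.
- rewrite /wH card_setE -cU -cV !cardT_sum -big_split /=; apply/eqP/eq_bigr => k _.
  rewrite rowofE !inE; have := impl (sU k); have := impl (sV k).
  by case: (k \in U); case: (k \in V); case: (x ord0 k == 1).
- rewrite /dab card_setE -cV !cardT_sum; apply/eqP/eq_bigr => k _.
  rewrite rowofE !inE; have := impl (sU k); have := impl (sV k).
  case: (F2_cases (x ord0 k)) => ->;
  by case: (k \in U); case: (k \in V).
- rewrite /dab card_setE -cU -cX !cardT_sum -big_split /=; apply/eqP/eq_bigr => k _.
  rewrite !inE; have := impl (sU k); have := impl (sV k).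
  case: (F2_cases (rowof U V ord0 k)) (rowofE U V k) => ->; rewrite ?inE;
  case: (F2_cases (x ord0 k)) => ->;
  by case: (k \in U); case: (k \in V).
Qed.
End Count.

Section Lam.
Local Open Scope set_scope.
Lemma lambda_le (R : realType) (g : R) (g0 : 0 <= g) n (i : nat) (x : 'rV['F_2]_n) (s : R) :
  (wH x <= n)%N ->
  lambda g n i (wH x) s <= (#|[set y : 'rV['F_2]_n | (wH y == i) && (disc g y x == s)]|)%:R.
Proof.
move=> hjn; rewrite /lambda /Bin.
have g1 : g + 1 != 0 by apply/negP => /eqP h; lra.
case: ifP => [/andP[_ hB]|_]; last by rewrite mul0r.
case: ifP => [/andP[_ hA]|_]; last by rewrite mulr0.
case/natrP: hB => B hB; case/natrP: hA => A hA.
rewrite hB hA !natrK -natrB // natrK -natrM ler_nat.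
apply: leq_trans (count_lb x A B) _.
apply: subset_leq_card; apply/fintype.subsetP => y; rewrite !inE => /and3P[/eqP wy /eqP d10 /eqP d01].
have e1 : i%:R * g - s + (wH x)%:R = B%:R * (g + 1).
  by rewrite -hB divfK.
have e2 : s - (wH x)%:R + i%:R = A%:R * (g + 1).
  by rewrite -hA divfK.
have e3 : (i%:R - A%:R - B%:R) * (g + 1) = 0 :> R.
  by rewrite !mulrBl -e1 -e2; ring.
have e4 : i%:R = A%:R + B%:R :> R.
  move/eqP: e3; rewrite mulf_eq0 (negPf g1) orbF => /eqP; lra.
have e5 : i = (A + B)%N by apply/eqP; rewrite -(eqr_nat R) natrD; apply/eqP.
rewrite wy -e5 eqxx /=; apply/eqP.
have : ((dab 0 1 y x) + B)%:R = (wH x)%:R :> R by rewrite d01.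
rewrite /disc d10 natrD => e6.
have -> : s = A%:R * (g + 1) + (wH x)%:R - i%:R by lra.
rewrite e4 -e6; ring.
Qed.
End Lam.

Section Inner.
Local Open Scope set_scope.

Lemma sum_part (T : finType) (U : eqType) (P : pred T) (f : T -> U) (r : seq U) : uniq r ->
  \sum_(s <- r) #|[set y | P y && (f y == s)]| = #|[set y | P y && (f y \in r)]|.
Proof.
move=> ur; rewrite cardT_sum.
under eq_bigr do rewrite cardT_sum.
rewrite exchange_big /=; apply: eq_bigr => y _; rewrite inE.
transitivity (\sum_(s <- r | s == f y) (P y : nat)).
  rewrite [RHS]big_mkcond /=; apply: eq_bigr => s _; rewrite inE eq_sym.
  by case: (s == f y); rewrite ?andbT ?andbF.
case: (P y) => /=; last by rewrite big1.
by rewrite sum1_count count_uniq_mem.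
Qed.

Lemma finite_support_in (R : realType) (D : set R) (F : R -> R) s :
  s \in finite_support 0 D F -> D s.
Proof.
case: (pselect (finite_set (D `&` F @^-1` [set~ 0]))) => fin.
  by rewrite in_finite_support // inE => -[].
by rewrite no_finite_support.
Qed.

Lemma inner_le (R : realType) (g : R) (g0 : 0 <= g) n (i : nat) (x : 'rV['F_2]_n) (h : R) :
  (wH x <= n)%N ->
  \sum_(s \in Sset g h) lambda g n i (wH x) s <=
    (#|[set y : 'rV['F_2]_n | (wH y == i) && (disc g y x < h)]|)%:R.
Proof.
move=> hjn.
set T := finite_support _ _ _.
apply: le_trans (_ : \sum_(s <- T) (#|[set y : 'rV['F_2]_n | (wH y == i) && (disc g y x == s)]|)%:R <= _).
  by apply: ler_sum => s _; apply: lambda_le.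
rewrite -natr_sum ler_nat sum_part; last exact: finite_support_uniq.
apply: subset_leq_card; apply/fintype.subsetP => y; rewrite !inE => /andP[-> /finite_support_in].
by move=> [_ [_ ]].
Qed.
End Inner.

Section Outer.
Local Open Scope set_scope.

Lemma wH_fin n (y : 'rV['F_2]_n) : #|[set k : 'I_n | y ord0 k == 1]| = wH y.
Proof. by rewrite /wH card_setE cardT_sum; apply: eq_bigr => k _; rewrite inE. Qed.

Lemma wH_le n (y : 'rV['F_2]_n) : (wH y <= n)%N.
Proof. by rewrite -wH_fin -[X in (_ <= X)%N]card_ord max_card. Qed.

Lemma card_wt n i : (#|[set y : 'rV['F_2]_n | wH y == i]| <= 'C(n, i))%N.
Proof.
rewrite -[X in 'C(X, _)]card_ord -card_draws.
pose F := fun y : 'rV['F_2]_n => [set k : 'I_n | y ord0 k == 1].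
have injF : injective F.
  move=> y1 y2 /setP e; apply/rowP => k; have := e k; rewrite !inE.
  by case: (F2_cases (y1 ord0 k)) => ->; case: (F2_cases (y2 ord0 k)) => ->.
rewrite -(card_imset _ injF); apply: subset_leq_card; apply/fintype.subsetP => A.
case/imsetP => y; rewrite !inE => /eqP wy ->; by rewrite /F wH_fin wy.
Qed.

Lemma disj_sum n (C : {set 'rV['F_2]_n}) (i : nat) (B : 'rV['F_2]_n -> {set 'rV['F_2]_n})
  (hB : forall x y, y \in B x -> wH y = i)
  (disj : forall x1 x2 y, x1 \in C -> x2 \in C -> x1 != x2 -> y \in B x1 -> y \in B x2 -> False) :
  (\sum_(x in C) #|B x| <= 'C(n, i))%N.
Proof.
apply: leq_trans (card_wt n i).
under eq_bigr do rewrite cardT_sum.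
rewrite exchange_big /= [X in (_ <= X)%N]cardT_sum; apply: leq_sum => y _.
case: (pickP [pred x | (x \in C) && (y \in B x)]) => [x0 /andP[x0C yB0]|none].
  rewrite (bigD1 x0) //= yB0 big1 /=.
    by rewrite inE (hB _ _ yB0) eqxx.
  move=> x /andP[xC xx0]; case yBx: (y \in B x) => //.
  by case: (disj x x0 y xC x0C xx0 yBx yB0).
rewrite big1 // => x xC; have := none x; rewrite /= xC /=; by case: (y \in B x).
Qed.

Lemma fs_mulr (R : realType) (D : set R) (F : R -> R) (c : R) : c != 0 ->
  finite_support 0 D (fun s => F s * c) = finite_support 0 D F.
Proof.
move=> hc; rewrite /finite_support !unlock; congr (finmap.enum_fset (fset_set _)).
apply/seteqP; split => s /= [Ds hs]; split => //; move: hs => /= /eqP hs; apply/eqP.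
  by move: hs; rewrite mulf_eq0 negb_or => /andP[].
by rewrite mulf_eq0 negb_or hs hc.
Qed.

Lemma outer (R : realType) (g : R) (g0 : 0 <= g) n (C : {set 'rV['F_2]_n}) (i : nat)
  (h : nat -> R)
  (disj : forall x1 x2 y, x1 \in C -> x2 \in C -> x1 != x2 -> wH y = i ->
     disc g y x1 < h (wH x1) -> disc g y x2 < h (wH x2) -> False) :
  \sum_(j < n.+1) \sum_(s \in Sset g (h j)) lambda g n i j s * (WH C j)%:R <= ('C(n, i))%:R.
Proof.
pose B := fun x => [set y : 'rV['F_2]_n | (wH y == i) && (disc g y x < h (wH x))].
apply: le_trans (_ : (\sum_(x in C) #|B x|)%:R <= _); last first.
  rewrite ler_nat; apply: disj_sum.
    by move=> x y; rewrite inE => /andP[/eqP].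
  move=> x1 x2 y x1C x2C x12; rewrite !inE => /andP[/eqP wy h1] /andP[_ h2].
  exact: (disj x1 x2 y x1C x2C x12 wy h1 h2).
rewrite natr_sum.
rewrite (partition_big (fun x : 'rV['F_2]_n => (inord (wH x) : 'I_n.+1)) xpredT) //=.
apply: ler_sum => j _.
have [W0|Wn0] := eqVneq (WH C j) 0%N.
  rewrite W0 big1; first by apply: sumr_ge0 => *.
  by move=> s _; rewrite mulr0.
rewrite fs_mulr; last by rewrite pnatr_eq0.
rewrite -big_distrl /= /WH mulr_natr -sumr_const.
rewrite [X in _ <= X](eq_bigl (fun x => x \in [set x in C | wH x == j])); last first.
  move=> x; rewrite !inE -(inj_eq val_inj) /= inordK // ltnS; exact: wH_le.
apply: ler_sum => x; rewrite inE => /andP[xC /eqP wx].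
have wxj : wH x = j by rewrite wx.
apply: le_trans (_ : \sum_(s \in Sset g (h (wH x))) lambda g n i (wH x) s <= _).
  by rewrite wxj.
exact: inner_le (wH_le x).
Qed.
End Outer.

Unset Implicit Arguments.
Theorem mainTheorem15 (R : realType) (n : nat) (hn : (2 <= n)%N) (p q : R)
  (hp : 0 < p) (hpq : p <= q) (hq : q < 1 / 2)
  (C : {set 'rV['F_2]_n}) (hC : (2 <= #|C|)%N) (i : nat) (hi : (i <= n)%N) :
  let g := gamma p q in
  (\sum_(j < n.+1)
      \sum_(s \in Sset g ((code_min (@disc R g n) C + (g - 1) * (i%:R - j%:R)) / 2))
        lambda g n i j s * (WH C j)%:R <= ('C(n, i))%:R)
  /\
  (\sum_(j < n.+1)
      \sum_(s \in Sset g ((code_min (@sdisc R g n) C + (g - 1) * i%:R) / 2))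
        lambda g n i j s * (WH C j)%:R <= ('C(n, i))%:R).
Proof.
move=> g; have g0 : 0 <= g := gamma_ge0 hp hpq hq.
split.
- apply: (outer g0 (h := fun j : nat => (code_min (@disc R g n) C + (g - 1) * (i%:R - j%:R)) / 2)).
  move=> x1 x2 y x1C x2C x12 wy /= h1 h2.
  have d21 := code_min_le (@disc R g n) x2C x1C x12.
  have d12 : code_min (@disc R g n) C <= disc g x1 x2 by apply: code_min_le; rewrite // eq_sym.
  have t1 := disc_tri x2 x1 y g0.
  have t2 := disc_tri x1 x2 y g0.
  move: t1 t2; rewrite (disc_swap g x2 y) (disc_swap g x1 y) wy => t1 t2.
  lra.
- apply: (outer g0 (h := fun j : nat => (code_min (@sdisc R g n) C + (g - 1) * i%:R) / 2)).
  move=> x1 x2 y x1C x2C x12 wy /= h1 h2.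
  have d21 := code_min_le (@sdisc R g n) x2C x1C x12.
  have t1 := disc_tri x2 x1 y g0.
  move: t1 d21; rewrite /sdisc (disc_swap g x2 y) wy => t1 d21.
  lra.
Qed.
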